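(* Let $\delta\ge0$ and define $f^\star_\delta(x,a)=I(\eta_a(x)>T^\star_{\delta,a})+\tau^\star_{\delta,a}I(\eta_a(x)=T^\star_{\delta,a})$ with $$\tau^\star_{\delta,1}=\rho\Big(\frac{\pi^\star_{0,+}-\pi^\star_{1,+}+\widetilde\delta}{\pi^\star_{1,=}}\Big),\qquad \tau^\star_{\delta,0}=\rho\Big(\frac{\pi^\star_{1,+}-\pi^\star_{0,+}-\widetilde\delta}{\pi^\star_{0,=}}\Big).$$ Then: if $D_-(0)>\delta$, $\mathrm{DDP}(f^\star_\delta)=\delta$; if $D_-(0)\le 0$, $\mathrm{DDP}(f^\star_\delta)=0$; and if $0<D_-(0)\le\delta$, $\mathrm{DDP}(f^\star_\delta)=D_-(0)$.
   Context: Let $(X,A,Y)$ be a random vector on $\mathbb{R}^d\times\{0,1\}\times\{0,1\}$ with law $P$; let $p_a=P(A=a)$ with $p_0,p_1>0$; let $P_{X|A=a}$ be the conditional law of $X$ given $A=a$; let $\eta_a(x)=P(Y=1\mid A=a,X=x)$. For a classifier $f:\mathbb{R}^d\times\{0,1\}\to[0,1]$, $\mathrm{DDP}(f)=\int f(x,1)\,dP_{X|A=1}(x)-\int f(x,0)\,dP_{X|A=0}(x)$. For $t\in\mathbb{R}$ define $D_-(t)=P_{X|A=1}\big(\eta_1(X)>\tfrac12+\tfrac{t}{2p_1}\big)-P_{X|A=0}\big(\eta_0(X)\ge\tfrac12-\tfrac{t}{2p_0}\big)$ and $D_+(t)=P_{X|A=1}\big(\eta_1(X)\ge\tfrac12+\tfrac{t}{2p_1}\big)-P_{X|A=0}\big(\eta_0(X)>\tfrac12-\tfrac{t}{2p_0}\big)$.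 For $\delta\ge 0$ let $t^\star_\delta=\inf\{t\in\mathbb{R}:D_-(t)<\delta\}$ if $D_-(0)>\delta$ and $t^\star_\delta=0$ otherwise; $T^\star_{\delta,1}=\tfrac12+\tfrac{t^\star_\delta}{2p_1}$, $T^\star_{\delta,0}=\tfrac12-\tfrac{t^\star_\delta}{2p_0}$. Standing assumption: $D_+(0)\ge -D_-(0)$. Let $\pi^\star_{a,+}=P_{X|A=a}(\eta_a(X)>T^\star_{\delta,a})$, $\pi^\star_{a,=}=P_{X|A=a}(\eta_a(X)=T^\star_{\delta,a})$, $\widetilde\delta=\delta\cdot I(D_-(0)>\delta)$, and $\rho:\mathbb{R}\to[0,1]$, $\rho(x)=0$ for $x\le0$, $\rho(x)=1$ for $x\ge1$, $\rho(x)=x$ otherwise. Convention: $x/0=0$ for all $x\in\mathbb{R}$. *)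

(* Defs.v *)
From HB Require Import structures.
From mathcomp Require Import all_boot all_order all_algebra.
From mathcomp Require Import all_classical all_reals all_analysis.
Set Implicit Arguments. Unset Strict Implicit. Unset Printing Implicit Defensive.
Import Order.TTheory GRing.Theory Num.Theory.
Import numFieldNormedType.Exports.
Local Open Scope classical_set_scope.
Local Open Scope ring_scope.

Definition Rd (R : realType) (d : nat) : measurableType _ :=
  g_sigma_algebraType (@open 'rV[R]_d).

Section FairDefs.
Context {dT : measure_display} {T : measurableType dT} {R : realType}.
(* Group index a \in {0,1} is encoded as a bool: true = 1, false = 0.
   mu a = P_{X|A=a},  eta a = eta_a,  p a = p_a = P(A = a). *)
Variables (mu : bool -> probability T R) (eta : bool -> T -> R) (p : bool -> R).

Definition prb (a : bool) (E : set T) : R := fine (mu a E).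

Definition Dminus (t : R) : R :=
  prb true [set x | 1/2 + t / (2 * p true) < eta true x]
  - prb false [set x | 1/2 - t / (2 * p false) <= eta false x].

Definition Dplus (t : R) : R :=
  prb true [set x | 1/2 + t / (2 * p true) <= eta true x]
  - prb false [set x | 1/2 - t / (2 * p false) < eta false x].

Definition tstar (delta : R) : R :=
  if delta < Dminus 0 then inf [set t | Dminus t < delta] else 0.

Definition Tstar (delta : R) (a : bool) : R :=
  if a then 1/2 + tstar delta / (2 * p true)
  else 1/2 - tstar delta / (2 * p false).

Definition pi_plus (delta : R) (a : bool) : R :=
  prb a [set x | Tstar delta a < eta a x].

Definition pi_eq (delta : R) (a : bool) : R :=
  prb a [set x | eta a x = Tstar delta a].

Definition delta_tilde (delta : R) : R :=
  if delta < Dminus 0 then delta else 0.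

(* rho(x) = 0 for x <= 0, 1 for x >= 1, x otherwise.
   Division uses MathComp's convention x / 0 = 0. *)
Definition rho (x : R) : R := Num.min (Num.max x 0) 1.

Definition tau_star (delta : R) (a : bool) : R :=
  if a then
    rho ((pi_plus delta false - pi_plus delta true + delta_tilde delta)
         / pi_eq delta true)
  else
    rho ((pi_plus delta true - pi_plus delta false - delta_tilde delta)
         / pi_eq delta false).

Definition f_star (delta : R) (x : T) (a : bool) : R :=
  (if Tstar delta a < eta a x then 1 else 0)
  + tau_star delta a * (if eta a x == Tstar delta a then 1 else 0).

Definition DDP (f : T -> bool -> R) : \bar R :=
  (\int[mu true]_x (f x true)%:E - \int[mu false]_x (f x false)%:E)%E.

End FairDefs.

(* Main.v *)
From HB Require Import structures.
From mathcomp Require Import all_boot all_order all_algebra.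
From mathcomp Require Import all_classical all_reals all_analysis.
From mathcomp Require Import measurable_realfun.
From mathcomp Require Import ring lra.
Require Import Defs.
Import Order.TTheory GRing.Theory Num.Theory.
Import numFieldNormedType.Exports.
Set Implicit Arguments. Unset Strict Implicit. Unset Printing Implicit Defensive.
Local Open Scope classical_set_scope.
Local Open Scope ring_scope.

Section Gen.
Context d (T : measurableType d) (R : realType) (mu : probability T R).
Variable (f : T -> R) (mf : measurable_fun setT f).

Lemma mgt c : measurable [set x | c < f x].
Proof.
have -> : [set x | c < f x] = setT `&` f @^-1` `]c, +oo[.
  apply/seteqP; split=> x /= => [h|[_]]; rewrite in_itv /= ?andbT //.
exact: mf measurableT _ (measurable_itv _).
Qed.
Lemma mge c : measurable [set x | c <= f x].
Proof.
have -> : [set x | c <= f x] = setT `&` f @^-1` `[c, +oo[.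
  apply/seteqP; split=> x /= => [h|[_]]; rewrite in_itv /= ?andbT //.
exact: mf measurableT _ (measurable_itv _).
Qed.
Lemma meq c : measurable [set x | f x = c].
Proof.
have -> : [set x | f x = c] = setT `&` f @^-1` [set c].
  by apply/seteqP; split=> x /= => [->|[_ ->]].
exact: mf measurableT _ (measurable_set1 _).
Qed.

Lemma mu_fin (A : set T) : measurable A -> mu A \is a fin_num.
Proof.
move=> mA; rewrite ge0_fin_numE; last exact: measure_ge0.
by apply: (le_lt_trans (probability_le1 _ mA)); rewrite ltey.
Qed.

Lemma arch (e y : R) : 0 < e -> 0 < y -> exists n : nat, e / n.+1%:R < y.
Proof.
move=> e0 y0; exists (Num.truncn (e / y)).
have h := truncnS_gt (e / y).
rewrite ltr_pdivrMr // mulrC -ltr_pdivrMr //.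
Qed.


Lemma decr (e : R) (n m : nat) : (n <= m)%N -> 0 <= e -> e / m.+1%:R <= e / n.+1%:R.
Proof.
move=> nm e0; rewrite ler_wpM2l // lef_pV2 ?posrE ?ltr0Sn // ler_nat ltnS //.
Qed.

Lemma epos (e : R) (n : nat) : 0 < e -> 0 < e / n.+1%:R.
Proof. by move=> e0; rewrite divr_gt0 // ltr0Sn. Qed.

Lemma cvg_up (S : (set T)^nat) (A : set T) :
  (forall n, measurable (S n)) -> measurable A -> nondecreasing_seq S ->
  \bigcup_n S n = A ->
  (fun n => fine (mu (S n))) @ \oo --> fine (mu A).
Proof.
move=> mS mA nd E.
have := @nondecreasing_cvg_mu _ _ _ mu S mS (ltac:(by rewrite E)) nd.
rewrite E => h; apply: (@fine_cvg _ _ _ _ (mu \o S) (fine (mu A))).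
by rewrite fineK // mu_fin.
Qed.

Lemma cvg_down (S : (set T)^nat) (A : set T) :
  (forall n, measurable (S n)) -> measurable A -> nonincreasing_seq S ->
  \bigcap_n S n = A ->
  (fun n => fine (mu (S n))) @ \oo --> fine (mu A).
Proof.
move=> mS mA nd E.
have h0 : (mu (S 0%N) < +oo)%E by rewrite ltey_eq mu_fin.
have := @nonincreasing_cvg_mu _ _ _ mu S h0 mS (ltac:(by rewrite E)) nd.
rewrite E => h; apply: (@fine_cvg _ _ _ _ (mu \o S) (fine (mu A))).
by rewrite fineK // mu_fin.
Qed.

Lemma L1 c e : 0 < e ->
  (fun n => fine (mu [set x | c + e / n.+1%:R < f x])) @ \oo --> fine (mu [set x | c < f x]).
Proof.
move=> e0; apply: cvg_up => //.
- move=> n; exact: mgt.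
- exact: mgt.
- move=> n m nm; apply/subsetPset => x /=; apply: le_lt_trans; rewrite lerD2l decr // ltW //.
apply/seteqP; split=> x /=.
  by case=> n _ /=; apply: le_lt_trans; rewrite lerDl ltW // epos.
move=> h; have [n hn] := arch e0 (ltac:(by rewrite subr_gt0) : 0 < f x - c).
by exists n => //=; rewrite -ltrBrDl.
Qed.

Lemma L2 c e : 0 < e ->
  (fun n => fine (mu [set x | c - e / n.+1%:R <= f x])) @ \oo --> fine (mu [set x | c <= f x]).
Proof.
move=> e0; apply: cvg_down => //.
- move=> n; exact: mge.
- exact: mge.
- move=> n m nm; apply/subsetPset => x /=; apply: le_trans; rewrite lerD2l lerN2 decr // ltW //.
apply/seteqP; split=> x /=; last first.
  by move=> h n _ /=; apply: le_trans h; rewrite gerDl oppr_le0 ltW // epos.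
move=> h; rewrite leNgt; apply/negP => hx.
have [n hn] := arch e0 (ltac:(by rewrite subr_gt0) : 0 < c - f x).
have := h n I; rewrite /= leNgt => /negP; apply.
by rewrite ltrBrDl -ltrBrDr.
Qed.

Lemma L3 c e : 0 < e ->
  (fun n => fine (mu [set x | c - e / n.+1%:R < f x])) @ \oo --> fine (mu [set x | c <= f x]).
Proof.
move=> e0; apply: cvg_down => //.
- move=> n; exact: mgt.
- exact: mge.
- move=> n m nm; apply/subsetPset => x /=; apply: le_lt_trans; rewrite lerD2l lerN2 decr // ltW //.
apply/seteqP; split=> x /=; last first.
  by move=> h n _ /=; apply: lt_le_trans h; rewrite gtrDl oppr_lt0 epos.
move=> h; rewrite leNgt; apply/negP => hx.
have [n hn] := arch e0 (ltac:(by rewrite subr_gt0) : 0 < c - f x).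
have := h n I; rewrite /= ltNge => /negP; apply.
by rewrite lerBrDl -lerBrDr ltW.
Qed.

Lemma L4 c e : 0 < e ->
  (fun n => fine (mu [set x | c + e / n.+1%:R <= f x])) @ \oo --> fine (mu [set x | c < f x]).
Proof.
move=> e0; apply: cvg_up => //.
- move=> n; exact: mge.
- exact: mgt.
- move=> n m nm; apply/subsetPset => x /=; apply: le_trans; rewrite lerD2l decr // ltW //.
apply/seteqP; split=> x /=.
  by case=> n _ /=; apply: lt_le_trans; rewrite ltrDl epos.
move=> h; have [n hn] := arch e0 (ltac:(by rewrite subr_gt0) : 0 < f x - c).
by exists n => //=; rewrite -lerBrDl ltW.
Qed.


Lemma prb_split c : fine (mu [set x | c <= f x]) =
  fine (mu [set x | c < f x]) + fine (mu [set x | f x = c]).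
Proof.
have -> : [set x | c <= f x] = [set x | c < f x] `|` [set x | f x = c].
  apply/seteqP; split=> x /=; first by rewrite le_eqVlt => /orP[/eqP->|]; [right|left].
  by case=> [/ltW|->].
rewrite measureU ?fineD ?mu_fin //; [exact: mgt|exact: meq|exact: mgt|exact: meq|].
by apply/seteqP; split=> x //= [h e]; move: h; rewrite e ltxx.
Qed.

End Gen.

Section Gen2.
Context d (T : measurableType d) (R : realType) (mu : probability T R).

Lemma prb_le (A B : set T) : measurable A -> measurable B -> A `<=` B ->
  fine (mu A) <= fine (mu B).
Proof.
move=> mA mB AB; apply: fine_le; rewrite ?mu_fin //.
by apply: le_measure; rewrite ?inE.
Qed.

Lemma integ (A B : set T) (k : R) : measurable A -> measurable B -> 0 <= k ->
  (\int[mu]_x ((if x \in A then 1 else 0) + k * (if x \in B then 1 else 0))%:E =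
  (fine (mu A) + k * fine (mu B))%:E)%E.
Proof.
move=> mA mB k0.
have -> : (fun x => ((if x \in A then 1 else 0) + k * (if x \in B then 1 else 0))%:E)
   = (fun x => ((\1_A x : R)%:E + k%:E * (\1_B x : R)%:E)%E).
  by apply/funext => x; rewrite !indicE; case: (x \in A); case: (x \in B).
rewrite ge0_integralD //.

rewrite ge0_integralZl //.
have h1 : (\int[mu]_x (\1_A x : R)%:E = mu A)%E.
  by rewrite -{2}(setIT A) integral_indic.
have h2 : (\int[mu]_x (\1_B x : R)%:E = mu B)%E.
  by rewrite -{2}(setIT B) integral_indic.
rewrite h1 h2.
  by rewrite EFinD EFinM !fineK // mu_fin.
- apply/measurable_EFinP; exact: measurable_indic.
- apply/measurable_EFinP; exact: measurable_indic.
- by move=> x _; rewrite mule_ge0 // lee_fin // indicE; case: (_ \in _).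
- apply: measurable_funeM; apply/measurable_EFinP; exact: measurable_indic.
Qed.

End Gen2.

Section Gen3.
Context d (T : measurableType d) (R : realType) (mu : probability T R).
Lemma mem_setb (b : T -> bool) x : (x \in [set y | b y]) = b x.
Proof. by apply/idP/idP => [/set_mem|/mem_set]. Qed.

Lemma integB (b1 b2 : T -> bool) (k : R) : measurable [set x | b1 x] ->
  measurable [set x | b2 x] -> 0 <= k ->
  (\int[mu]_x ((if b1 x then 1 else 0) + k * (if b2 x then 1 else 0))%:E =
  (fine (mu [set x | b1 x]) + k * fine (mu [set x | b2 x]))%:E)%E.
Proof.
move=> m1 m2 k0; rewrite -integ //.
by apply: eq_integral => x _; rewrite !mem_setb.
Qed.
End Gen3.

Section Real.
Context (R : realType).
Lemma rho_ge0 (x : R) : 0 <= rho x.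
Proof. by rewrite /rho le_min le_max lexx orbT ler01. Qed.

Lemma rho_mul (g E : R) : 0 <= E -> 0 <= g <= E -> rho (g / E) * E = g.
Proof.
move=> E0 /andP[g0 gE]; have [E0'|Ep] := eqVneq E 0.
  by rewrite E0' mulr0 in gE *; lra.
have Eg : 0 < E by rewrite lt_neqAle eq_sym Ep.
have h0 : 0 <= g / E by rewrite divr_ge0.
have h1 : g / E <= 1 by rewrite ler_pdivrMr // mul1r.
rewrite /rho (max_l h0) (min_l h1) mulrVK //; exact: unitf_gt0.
Qed.

Lemma rho_neg (g E : R) : g <= 0 -> 0 <= E -> rho (g / E) = 0.
Proof.
move=> g0 E0; have h : g / E <= 0 by rewrite mulr_le0_ge0 // invr_ge0.
by rewrite /rho (max_r h) (min_l ler01).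
Qed.

Lemma rho_big (g E : R) : 0 <= E -> E <= g -> rho (g / E) * E = E.
Proof.
move=> E0 Eg; have [->|Ep] := eqVneq E 0; first by rewrite !mulr0.
have Eg' : 0 < E by rewrite lt_neqAle eq_sym Ep.
have h1 : 1 <= g / E by rewrite ler_pdivlMr // mul1r.
by rewrite /rho (max_l (le_trans ler01 h1)) (min_r h1) mul1r.
Qed.

Lemma key (P1 P0 E1 E0 del : R) : 0 <= E1 -> 0 <= E0 ->
  P1 - (P0 + E0) <= del -> del <= P1 + E1 - P0 ->
  P1 + rho ((P0 - P1 + del) / E1) * E1
  - (P0 + rho ((P1 - P0 - del) / E0) * E0) = del.
Proof.
move=> E10 E00 h1 h2.
have [g0|g0] := leP 0 (P0 - P1 + del).
  rewrite rho_mul //; last by apply/andP; split; lra.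
  rewrite rho_neg //; [ring|lra].
have -> : P1 - P0 - del = - (P0 - P1 + del) by ring.
rewrite (rho_neg (E := E1)) //; last by lra.
rewrite rho_mul //; last by apply/andP; split; lra.
ring.
Qed.

Lemma key3 (P1 P0 E1 E0 : R) : 0 <= E1 -> 0 <= E0 ->
  0 < P1 - (P0 + E0) ->
  P1 + rho ((P0 - P1 + 0) / E1) * E1
  - (P0 + rho ((P1 - P0 - 0) / E0) * E0) = P1 - (P0 + E0).
Proof.
move=> E10 E00 h.
rewrite rho_neg //; last by lra.
rewrite rho_big //; [ring|lra].
Qed.
End Real.

Unset Implicit Arguments.
Unset Strict Implicit.

Theorem proposition5p1 (R : realType) (d : nat)
  (mu : bool -> probability (Rd R d) R)
  (eta : bool -> Rd R d -> R) (p : bool -> R)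
  (p_pos : forall a, 0 < p a)
  (p_sum : p false + p true = 1)
  (eta_meas : forall a, measurable_fun setT (eta a))
  (eta_range : forall a x, 0 <= eta a x <= 1)
  (standing : Dplus mu eta p 0 >= - Dminus mu eta p 0)
  (delta : R) (delta_ge0 : 0 <= delta) :
  (delta < Dminus mu eta p 0 ->
     DDP mu (f_star mu eta p delta) = delta%:E) /\
  (Dminus mu eta p 0 <= 0 ->
     DDP mu (f_star mu eta p delta) = 0%E) /\
  (0 < Dminus mu eta p 0 <= delta ->
     DDP mu (f_star mu eta p delta) = (Dminus mu eta p 0)%:E).
Proof.
pose D := Dminus mu eta p.
have mgt' a c : measurable [set x | c < eta a x] := mgt (eta_meas a) c.
have mge' a c : measurable [set x | c <= eta a x] := mge (eta_meas a) c.
have meq' a c : measurable [set x | eta a x = c] := meq (eta_meas a) c.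
have seteq a c : [set x | eta a x == c] = [set x | eta a x = c].
  by apply/seteqP; split=> x /= /eqP.
have hp0 := p_pos false; have hp1 := p_pos true.
have hdiv a s t : s <= t -> s / (2 * p a) <= t / (2 * p a).
  by move=> st; rewrite ler_wpM2r // invr_ge0 mulr_ge0 // ltW.
have mono s t : s <= t -> D t <= D s.
  move=> st; rewrite /D /Dminus /prb; apply: lerB.
  - apply: prb_le; [exact: mgt'|exact: mgt'|] => x /=.
    by apply: le_lt_trans; rewrite lerD2l hdiv.
  - apply: prb_le; [exact: mge'|exact: mge'|] => x /=.
    by apply: le_trans; rewrite lerD2l lerN2 hdiv.
pose t0 := tstar mu eta p delta.
have idm : D t0 = pi_plus mu eta p delta true
    - (pi_plus mu eta p delta false + pi_eq mu eta p delta false).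
  by rewrite /D /Dminus /pi_plus /pi_eq /Tstar /prb (prb_split (mu false) (eta_meas false)).
have idp : Dplus mu eta p t0 = pi_plus mu eta p delta true
    + pi_eq mu eta p delta true - pi_plus mu eta p delta false.
  by rewrite /Dplus /pi_plus /pi_eq /Tstar /prb (prb_split (mu true) (eta_meas true)).
have ddp : DDP mu (f_star mu eta p delta) =
   ((pi_plus mu eta p delta true + tau_star mu eta p delta true * pi_eq mu eta p delta true)
  - (pi_plus mu eta p delta false + tau_star mu eta p delta false * pi_eq mu eta p delta false))%:E.
  rewrite /DDP /f_star.
  rewrite (integB (mu true) (b1 := fun x => Tstar mu eta p delta true < eta true x)
     (b2 := fun x => eta true x == Tstar mu eta p delta true)); last 3 first.
  - exact: mgt'.
  - rewrite seteq; exact: meq'.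
  - exact: rho_ge0.
  rewrite (integB (mu false) (b1 := fun x => Tstar mu eta p delta false < eta false x)
     (b2 := fun x => eta false x == Tstar mu eta p delta false)); last 3 first.
  - exact: mgt'.
  - rewrite seteq; exact: meq'.
  - exact: rho_ge0.
  by rewrite -EFinB !seteq.
have hn (n : nat) : (1 + n%:R : R) != 0 by rewrite addrC natr1 pnatr_eq0.
have hpn a : p a != 0 by rewrite lt0r_neq0.
have hE a : 0 <= pi_eq mu eta p delta a by apply: fine_ge0; exact: measure_ge0.
have hD0 : D 0 = Dminus mu eta p 0 by [].
rewrite ddp; split; [|split].
- move=> hD; rewrite -hD0 in hD.
  pose S := [set t | D t < delta].
  have ht : t0 = inf S by rewrite /t0 /tstar -hD0 hD.
  have S2 : S 2.
    rewrite /S /= /D /Dminus /prb.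
    have -> : [set x : Rd R d | 1/2 + 2/(2 * p true) < eta true x] = set0.
      apply/seteqP; split=> x //= h; move: (eta_range true x) => /andP[_ h1].
      have : 1 <= 2 / (2 * p true) by rewrite ler_pdivlMr ?mulr_gt0 // mul1r; lra.
      lra.
    have -> : [set x : Rd R d | 1/2 - 2/(2 * p false) <= eta false x] = setT.
      apply/seteqP; split=> x //= _; move: (eta_range false x) => /andP[h0 _].
      have : 1 <= 2 / (2 * p false) by rewrite ler_pdivlMr ?mulr_gt0 // mul1r; lra.
      lra.
    rewrite measure0 probability_setT /=; lra.
  have lbS t : S t -> 0 <= t.
    move=> St; rewrite leNgt; apply/negP => tn; have := mono _ _ (ltW tn).
    rewrite /S /= in St; lra.
  have hasinf : has_inf S by split; [exists 2 | exists 0 => t St; exact: lbS].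
  have tpos : 0 <= t0 by rewrite ht; apply: lb_le_inf; [exists 2|exact: lbS].
  have right n : D (t0 + 1 / n.+1%:R) < delta.
    have [e Se he] := inf_adherent (epos n ltr01) hasinf.
    rewrite -ht in he; apply: le_lt_trans Se; apply: mono; exact: ltW.
  have left t : t < t0 -> delta <= D t.
    move=> tt; rewrite leNgt; apply/negP => h.
    by move: tt; rewrite ht ltNge => /negP; apply; apply: ge_inf (hasinf.2) _ h.
  have Hle : fine (mu true [set x | Tstar mu eta p delta true < eta true x])
     - fine (mu false [set x | Tstar mu eta p delta false <= eta false x]) <= delta.
    have e1 : 0 < 1 / (2 * p true) by rewrite divr_gt0 ?mulr_gt0.
    have e0 : 0 < 1 / (2 * p false) by rewrite divr_gt0 ?mulr_gt0.
    have hA := L1 (mu:=mu true) (c:=Tstar mu eta p delta true) (eta_meas true) e1.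
    have hB := L2 (mu:=mu false) (c:=Tstar mu eta p delta false) (eta_meas false) e0.
    apply: (cvgr_to_le (cvgB hA hB)); apply: nearW => n /=.
    have := right n; rewrite /D /Dminus /prb.
    have -> : 1/2 + (t0 + 1/n.+1%:R)/(2 * p true) = Tstar mu eta p delta true + 1/(2 * p true)/n.+1%:R.
      rewrite /Tstar -/t0; field; by rewrite ?hn ?hpn.
    have -> : 1/2 - (t0 + 1/n.+1%:R)/(2 * p false) = Tstar mu eta p delta false - 1/(2 * p false)/n.+1%:R.
      rewrite /Tstar -/t0; field; by rewrite ?hn ?hpn.
    move=> h; exact: ltW.
  have Dle : pi_plus mu eta p delta true
    - (pi_plus mu eta p delta false + pi_eq mu eta p delta false) <= delta.
    move: Hle; rewrite (prb_split (mu false) (eta_meas false)) => h; exact: h.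
  have t0pos : 0 < t0.
    rewrite lt_neqAle tpos andbT; apply/eqP => t00.
    have := idm; rewrite -t00; lra.
  have Hge : delta <= fine (mu true [set x | Tstar mu eta p delta true <= eta true x])
     - fine (mu false [set x | Tstar mu eta p delta false < eta false x]).
    have e1 : 0 < t0 / (2 * p true) by rewrite divr_gt0 ?mulr_gt0.
    have e0 : 0 < t0 / (2 * p false) by rewrite divr_gt0 ?mulr_gt0.
    have hA := L3 (mu:=mu true) (c:=Tstar mu eta p delta true) (eta_meas true) e1.
    have hB := L4 (mu:=mu false) (c:=Tstar mu eta p delta false) (eta_meas false) e0.
    apply: (cvgr_to_ge (cvgB hA hB)); apply: nearW => n /=.
    have ltn : t0 - t0 / n.+1%:R < t0 by rewrite ltrBlDr ltrDl; exact: epos.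
    have := left _ ltn.
    rewrite /D /Dminus /prb.
    have -> : 1/2 + (t0 - t0/n.+1%:R)/(2 * p true) = Tstar mu eta p delta true - t0/(2 * p true)/n.+1%:R.
      rewrite /Tstar -/t0; field; by rewrite ?hn ?hpn.
    have -> : 1/2 - (t0 - t0/n.+1%:R)/(2 * p false) = Tstar mu eta p delta false + t0/(2 * p false)/n.+1%:R.
      rewrite /Tstar -/t0; field; by rewrite ?hn ?hpn.
    by [].
  have Dge : delta <= pi_plus mu eta p delta true + pi_eq mu eta p delta true
     - pi_plus mu eta p delta false.
    move: Hge; rewrite (prb_split (mu true) (eta_meas true)) => h; exact: h.
  congr (_%:E).
  rewrite /tau_star /delta_tilde -hD0 hD.
  by apply: key.
- move=> hD; rewrite -hD0 in hD.
  have ht : t0 = 0 by rewrite /t0 /tstar -hD0 ltNge (le_trans hD delta_ge0).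
  rewrite ht in idm idp.
  rewrite -hD0 in standing.
  congr (_%:E).
  rewrite /tau_star /delta_tilde -hD0 ltNge (le_trans hD delta_ge0) /=.
  apply: key; rewrite ?hE //; lra.
- move=> /andP[hD1 hD2]; rewrite -hD0 in hD1 hD2 *.
  have ht : t0 = 0 by rewrite /t0 /tstar -hD0 ltNge hD2.
  rewrite ht in idm.
  congr (_%:E).
  rewrite /tau_star /delta_tilde -hD0 ltNge hD2 /= idm.
  apply: key3; rewrite ?hE //; lra.
Qed.
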